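(* Let $(\eta,\theta)\in\mathcal{R}$, let $P(u_m,v_m)$ and $Q(u_M,v_M)$ be the two fold points of the critical manifold $M_{20}$, and suppose the interior equilibrium $E_*=(u_*,v_* )$ exists and satisfies $u_*>u_M$. Then for every sufficiently small $\epsilon>0$, $E_*$ is globally stable for the system $$\frac{du}{dt}=u(1-u)(u+\theta)(u^2+\eta)-u^2v,\qquad \frac{dv}{dt}=\epsilon\big(u^2v-\delta v(u^2+\eta)\big),$$ i.e., it is locally stable and every trajectory starting in the open first quadrant converges to $E_*$ as $t\to\infty$.
   Context: Parameters are $\delta,\theta,\eta>0$. Let $\phi(u)=\frac1u(1-u)(u+\theta)(u^2+\eta)$ and the critical manifold $M_{20}=\{(u,v):u>0,\ v=\phi(u)\}$. Let $\Gamma=9\theta^2+6\theta+9-24\eta$, $\Lambda_1=\frac{\eta}{8}(\theta^2+\frac{22}{3}\theta+1)-\frac{1}{96}(3(1+\theta^4)+2(\theta^2+4\eta^2))$ and $\Lambda_2=\frac{1-\theta}{288}(3\theta^2+2\theta+3-8\eta)$. Define - $\mathcal{R}_1=\{0<\eta<\theta\le1,\ \frac{\sqrt\Gamma}{3}-3<\theta<1+\frac{\sqrt\Gamma}{3},\ \Gamma>(\Lambda_1/\Lambda_2)^2\}$, - $\mathcal{R}_2=\{0<\eta<1<\theta,\ \frac{\sqrt\Gamma}{3}-3<\theta<1+\frac{\sqrt\Gamma}{3},\ \Gamma<(\Lambda_1/\Lambda_2)^2\}$, - $\mathcal{R}_3=\{0<\theta<1<\eta,\ \frac{\sqrt\Gamma}{3}-3<\theta<1,\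 \Gamma>(\Lambda_1/\Lambda_2)^2\}$, and $\mathcal{R}=\mathcal{R}_1\cup\mathcal{R}_2\cup\mathcal{R}_3$. For $(\eta,\theta)\in\mathcal{R}$, $\phi$ has exactly two critical points in $(0,1)$: a local minimum $u_m$ and a local maximum $u_M>u_m$, giving fold points $P=(u_m,\phi(u_m))$ and $Q=(u_M,\phi(u_M))$. The interior equilibrium is $E_*=(u_*,v_* )$ with $u_*=\sqrt{\delta\eta/(1-\delta)}$ and $v_*=\phi(u_* )$. It lies in the open first quadrant when $\delta<1/(1+\eta)$. *)

(* Defs.v *)
From Stdlib Require Import Reals.
From Coquelicot Require Import Coquelicot.
Open Scope R_scope.

(* phi(u) = (1/u)(1-u)(u+theta)(u^2+eta); the critical manifold M_20 is v = phi u, u > 0 *)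
Definition phi (theta eta u : R) : R :=
  / u * (1 - u) * (u + theta) * (u ^ 2 + eta).

Definition Gamma (eta theta : R) : R := 9 * theta ^ 2 + 6 * theta + 9 - 24 * eta.

Definition Lambda1 (eta theta : R) : R :=
  eta / 8 * (theta ^ 2 + 22 / 3 * theta + 1)
  - 1 / 96 * (3 * (1 + theta ^ 4) + 2 * (theta ^ 2 + 4 * eta ^ 2)).

Definition Lambda2 (eta theta : R) : R :=
  (1 - theta) / 288 * (3 * theta ^ 2 + 2 * theta + 3 - 8 * eta).

Definition region1 (eta theta : R) : Prop :=
  0 < eta /\ eta < theta /\ theta <= 1 /\
  sqrt (Gamma eta theta) / 3 - 3 < theta /\ theta < 1 + sqrt (Gamma eta theta) / 3 /\
  Gamma eta theta > (Lambda1 eta theta / Lambda2 eta theta) ^ 2.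

Definition region2 (eta theta : R) : Prop :=
  0 < eta /\ eta < 1 /\ 1 < theta /\
  sqrt (Gamma eta theta) / 3 - 3 < theta /\ theta < 1 + sqrt (Gamma eta theta) / 3 /\
  Gamma eta theta < (Lambda1 eta theta / Lambda2 eta theta) ^ 2.

Definition region3 (eta theta : R) : Prop :=
  0 < theta /\ theta < 1 /\ 1 < eta /\
  sqrt (Gamma eta theta) / 3 - 3 < theta /\ theta < 1 /\
  Gamma eta theta > (Lambda1 eta theta / Lambda2 eta theta) ^ 2.

Definition in_region (eta theta : R) : Prop :=
  region1 eta theta \/ region2 eta theta \/ region3 eta theta.

Definition ustar (delta eta : R) : R := sqrt (delta * eta / (1 - delta)).
Definition vstar (delta theta eta : R) : R := phi theta eta (ustar delta eta).

Definition F1 (theta eta u v : R) : R :=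
  u * (1 - u) * (u + theta) * (u ^ 2 + eta) - u ^ 2 * v.
Definition F2 (delta eta eps u v : R) : R :=
  eps * (u ^ 2 * v - delta * v * (u ^ 2 + eta)).

Definition is_solution (delta theta eta eps : R) (u v : R -> R) : Prop :=
  forall t, 0 <= t ->
    is_derive u t (F1 theta eta (u t) (v t)) /\
    is_derive v t (F2 delta eta eps (u t) (v t)).

Definition lyapunov_stable (delta theta eta eps us vs : R) : Prop :=
  forall e, 0 < e -> exists d, 0 < d /\
    forall u v : R -> R, is_solution delta theta eta eps u v ->
      (u 0 - us) ^ 2 + (v 0 - vs) ^ 2 < d ^ 2 ->
      forall t, 0 <= t -> (u t - us) ^ 2 + (v t - vs) ^ 2 < e ^ 2.

Definition globally_stable (delta theta eta eps us vs : R) : Prop :=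
  lyapunov_stable delta theta eta eps us vs /\
  forall u v : R -> R, is_solution delta theta eta eps u v ->
    0 < u 0 -> 0 < v 0 ->
    is_lim u p_infty us /\ is_lim v p_infty vs.

(* Main.v *)
Require Import Defs.
From Stdlib Require Import Reals.
From Coquelicot Require Import Coquelicot.
From Stdlib Require Import Lra Psatz Classical.
Open Scope R_scope.

Lemma ln_le_xm1 x : 0 < x -> ln x <= x - 1.
Proof. intros Hx. pose proof (exp_ineq1_le (ln x)) as H. rewrite exp_ln in H; lra. Qed.

Lemma ln_lt_xm1 x : 0 < x -> x <> 1 -> ln x < x - 1.
Proof.
  intros Hx H1. assert (ln x <> 0) as H.
  { intro E. apply H1. rewrite <- (exp_ln x Hx), E, exp_0. reflexivity. }
  pose proof (exp_ineq1 (ln x) H) as H0. rewrite exp_ln in H0; lra.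
Qed.

Lemma ln_ge_1m x : 0 < x -> 1 - /x <= ln x.
Proof.
  intros H. pose proof (ln_le_xm1 (/x) (Rinv_0_lt_compat _ H)) as H0.
  rewrite ln_Rinv in H0 by lra. lra.
Qed.

Lemma ln_le_half x : 0 < x -> ln x <= x / 2.
Proof.
  intros H. set (r := sqrt x). assert (0 < r) by (apply sqrt_lt_R0; lra).
  assert (x = r*r) as E by (unfold r; rewrite sqrt_sqrt; lra).
  rewrite E, ln_mult by lra. pose proof (ln_le_xm1 r H0).
  assert (0 <= (r-2)*(r-2)) by apply Rle_0_sqr. lra.
Qed.

Lemma deriv_cont f x l : is_derive f x l -> continuity_pt f x.
Proof.
  intros H. apply is_derive_Reals in H. apply derivable_continuous_pt.
  exact (exist _ l H).
Qed.

Lemma cont_ed f x : continuity_pt f x -> forall e, 0 < e ->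
  exists d, 0 < d /\ forall y, Rabs (y - x) < d -> Rabs (f y - f x) < e.
Proof.
  intros H e He. destruct (H e He) as [d [Hd H']]. exists d; split; auto.
  intros y Hy. destruct (Req_dec y x) as [->|Hne].
  - rewrite Rminus_diag, Rabs_R0; lra.
  - apply (H' y). split.
    + unfold D_x, no_cond. split; auto.
    + simpl. unfold R_dist. exact Hy.
Qed.

Lemma first_reach f a b c : a < b -> (forall x, a <= x <= b -> continuity_pt f x) ->
  f a < c -> c <= f b ->
  exists s, a < s <= b /\ f s = c /\ forall x, a <= x < s -> f x < c.
Proof.
  intros Hab Hc Ha Hb.
  set (E := fun x => a <= x <= b /\ forall y, a <= y <= x -> f y < c).
  assert (HE : bound E). { exists b. intros x [Hx _]. lra. }
  assert (HEa : exists x, E x).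
  { exists a. split. lra. intros y Hy. replace y with a by lra. exact Ha. }
  destruct (completeness E HE HEa) as [s [Hub Hlub]].
  assert (Has : a <= s). { apply Hub. destruct HEa as [x Hx]. split. lra.
    intros y Hy. replace y with a by lra. exact Ha. }
  assert (Hsb : s <= b). { apply Hlub. intros x [Hx _]. lra. }
  assert (Hbelow : forall x, a <= x < s -> f x < c).
  { intros x Hx. destruct (classic (exists e, E e /\ x < e)) as [[e [[He1 He2] Hxe]]|Hn].
    - apply He2. lra.
    - exfalso. assert (s <= x). { apply Hlub. intros e He.
        destruct (Rle_lt_dec e x); auto. exfalso. apply Hn. exists e. auto. }
      lra. }
  assert (Hfs : f s = c).
  { destruct (Rtotal_order (f s) c) as [Hlt|[Heq|Hgt]]; auto; exfalso.
    - assert (s < b) by (destruct (Req_dec s b) as [->|]; lra).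
      destruct (cont_ed f s (Hc s ltac:(lra)) (c - f s) ltac:(lra)) as [d [Hd Hd']].
      set (x1 := Rmin (s + d/2) b).
      assert (E x1).
      { split. { unfold x1. split; [apply Rmin_case | apply Rmin_r]; lra. } intros y Hy.
        destruct (Rlt_le_dec y s). apply Hbelow; lra.
        assert (Rabs (y - s) < d). { rewrite Rabs_right by lra.
          assert (y <= s + d/2). { unfold x1 in Hy. pose proof (Rmin_l (s+d/2) b). lra. } lra. }
        specialize (Hd' y H0). apply Rabs_def2 in Hd'. lra. }
      apply Hub in H0. unfold x1 in H0. revert H0. apply Rmin_case; lra.
    - assert (a < s) by (destruct (Req_dec a s) as [<-|]; lra).
      destruct (cont_ed f s (Hc s ltac:(lra)) (f s - c) ltac:(lra)) as [d [Hd Hd']].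
      set (x1 := Rmax (s - d/2) a).
      assert (a <= x1 < s) by (unfold x1; split; [apply Rmax_r | apply Rmax_case; lra]).
      assert (Rabs (x1 - s) < d).
      { rewrite Rabs_left1 by lra. unfold x1. pose proof (Rmax_l (s - d/2) a). lra. }
      specialize (Hd' x1 H1). apply Rabs_def2 in Hd'. specialize (Hbelow x1 H0). lra. }
  exists s. split; [|split; auto].
  split; auto. destruct (Req_dec a s) as [<-|]; lra.
Qed.

Lemma first_exit f a b c : a < b -> (forall x, a <= x <= b -> continuity_pt f x) ->
  c <= f a -> f b < c ->
  exists s, a <= s < b /\ f s = c /\ (forall x, a <= x <= s -> c <= f x) /\
    forall r, 0 < r -> exists y, s < y < s + r /\ y <= b /\ f y < c.
Proof.
  intros Hab Hc Ha Hb.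
  set (E := fun x => a <= x <= b /\ forall y, a <= y <= x -> c <= f y).
  assert (HE : bound E). { exists b. intros x [Hx _]. lra. }
  assert (HEa : E a).
  { split. lra. intros y Hy. replace y with a by lra. exact Ha. }
  destruct (completeness E HE (ex_intro _ a HEa)) as [s [Hub Hlub]].
  assert (Has : a <= s) by (apply Hub; exact HEa).
  assert (Hsb : s <= b). { apply Hlub. intros x [Hx _]. lra. }
  assert (Hbelow : forall x, a <= x < s -> c <= f x).
  { intros x Hx. destruct (classic (exists e, E e /\ x < e)) as [[e [[He1 He2] Hxe]]|Hn].
    - apply He2. lra.
    - exfalso. assert (s <= x). { apply Hlub. intros e He.
        destruct (Rle_lt_dec e x); auto. exfalso. apply Hn. exists e. auto. }
      lra. }
  assert (Hfs1 : c <= f s).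
  { destruct (Rle_lt_dec c (f s)) as [|Hlt]; auto. exfalso.
    assert (a < s) by (destruct (Req_dec a s) as [<-|]; lra).
    destruct (cont_ed f s (Hc s ltac:(lra)) (c - f s) ltac:(lra)) as [d [Hd Hd']].
    set (x1 := Rmax (s - d/2) a).
    assert (a <= x1 < s) by (unfold x1; split; [apply Rmax_r | apply Rmax_case; lra]).
    assert (Rabs (x1 - s) < d).
    { rewrite Rabs_left1 by lra. unfold x1. pose proof (Rmax_l (s - d/2) a). lra. }
    specialize (Hd' x1 H1). apply Rabs_def2 in Hd'. specialize (Hbelow x1 H0). lra. }
  assert (Hsb' : s < b) by (destruct (Req_dec s b) as [->|]; lra).
  assert (Hall : forall x, a <= x <= s -> c <= f x).
  { intros x Hx. destruct (Req_dec x s) as [->|]; auto. apply Hbelow; lra. }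
  assert (Hfs : f s = c).
  { destruct (Rle_lt_or_eq_dec _ _ Hfs1) as [Hgt|]; auto. exfalso.
    destruct (cont_ed f s (Hc s ltac:(lra)) (f s - c) ltac:(lra)) as [d [Hd Hd']].
    set (x1 := Rmin (s + d/2) b).
    assert (E x1).
    { split. { unfold x1. split; [apply Rmin_case | apply Rmin_r]; lra. } intros y Hy.
      destruct (Rle_lt_dec y s). apply Hall; lra.
      assert (Rabs (y - s) < d). { rewrite Rabs_right by lra.
        assert (y <= s + d/2). { unfold x1 in Hy. pose proof (Rmin_l (s+d/2) b). lra. } lra. }
      specialize (Hd' y H). apply Rabs_def2 in Hd'. lra. }
    apply Hub in H. unfold x1 in H. revert H. apply Rmin_case; lra. }
  exists s. split; [lra|split; [auto|split; [auto|]]].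
  intros r Hr. destruct (classic (exists y, s < y < s + r /\ y <= b /\ f y < c)) as [Hy|Hn]; auto.
  exfalso. set (x1 := Rmin (s + r/2) b).
  assert (E x1).
  { split. { unfold x1. split; [apply Rmin_case | apply Rmin_r]; lra. } intros y Hy.
    destruct (Rle_lt_dec y s). apply Hall; lra.
    destruct (Rle_lt_dec c (f y)) as [|Hlt]; auto. exfalso. apply Hn. exists y.
    assert (y <= s + r/2) by (unfold x1 in Hy; pose proof (Rmin_l (s+r/2) b); lra).
    assert (y <= b) by (unfold x1 in Hy; pose proof (Rmin_r (s+r/2) b); lra).
    repeat split; lra. }
  apply Hub in H. unfold x1 in H. revert H. apply Rmin_case; lra.
Qed.

Lemma deriv_exit_le f s l : is_derive f s l ->
  (forall r, 0 < r -> exists y, s < y < s + r /\ f y < f s) -> l <= 0.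
Proof.
  intros Hd Hy. apply is_derive_Reals in Hd. destruct (Rle_lt_dec l 0) as [|Hl]; auto. exfalso.
  destruct (Hd (l/2) ltac:(lra)) as [d Hd'].
  destruct (Hy d (cond_pos d)) as [y [[H1 H2] H3]].
  specialize (Hd' (y - s)). assert (y - s <> 0) by lra.
  assert (Rabs (y-s) < d) by (rewrite Rabs_right; lra).
  specialize (Hd' H H0). replace (s + (y - s)) with y in Hd' by ring.
  apply Rabs_def2 in Hd'. destruct Hd' as [Ha Hb].
  assert (0 < /(y-s)) by (apply Rinv_0_lt_compat; lra).
  unfold Rdiv in *. nra.
Qed.

Lemma deriv_reach_ge f s l r : is_derive f s l -> 0 < r ->
  (forall x, s - r < x < s -> f x < f s) -> 0 <= l.
Proof.
  intros Hd Hr Hx. apply is_derive_Reals in Hd. destruct (Rle_lt_dec 0 l) as [|Hl]; auto. exfalso.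
  destruct (Hd (-l/2) ltac:(lra)) as [d Hd'].
  set (h := - Rmin (d/2) (r/2)).
  assert (Hh1 : 0 < Rmin (d/2) (r/2)) by (apply Rmin_case; pose proof (cond_pos d); lra).
  assert (Hh2 : Rmin (d/2) (r/2) <= d/2) by apply Rmin_l.
  assert (Hh3 : Rmin (d/2) (r/2) <= r/2) by apply Rmin_r.
  specialize (Hd' h). assert (h <> 0) by (unfold h; lra).
  assert (Rabs h < d) by (unfold h; rewrite Rabs_left; pose proof (cond_pos d); lra).
  specialize (Hd' H H0). specialize (Hx (s + h) ltac:(unfold h; lra)).
  apply Rabs_def2 in Hd'. destruct Hd' as [Ha Hb].
  assert (/h < 0) by (apply Rinv_lt_0_compat; unfold h; lra).
  unfold Rdiv in *. nra.
Qed.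

Lemma mvt_ex f df a b : a <= b -> (forall x, a <= x <= b -> is_derive f x (df x)) ->
  exists c, a <= c <= b /\ f b - f a = df c * (b - a).
Proof.
  intros Hab Hd. destruct (MVT_gen f a b df) as [c [Hc Heq]].
  - intros x Hx. rewrite Rmin_left, Rmax_right in Hx by lra. apply Hd; lra.
  - intros x Hx. rewrite Rmin_left, Rmax_right in Hx by lra. apply deriv_cont with (df x). apply Hd; lra.
  - rewrite Rmin_left, Rmax_right in Hc by lra. exists c; auto.
Qed.

Lemma mvt_upper f df a b K : a <= b -> (forall x, a <= x <= b -> is_derive f x (df x)) ->
  (forall x, a <= x <= b -> df x <= K) -> f b - f a <= K * (b - a).
Proof.
  intros Hab Hd HK. destruct (mvt_ex f df a b Hab Hd) as [c [Hc ->]].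
  apply Rmult_le_compat_r; [lra| apply HK; lra].
Qed.

Lemma mvt_lower f df a b K : a <= b -> (forall x, a <= x <= b -> is_derive f x (df x)) ->
  (forall x, a <= x <= b -> K <= df x) -> K * (b - a) <= f b - f a.
Proof.
  intros Hab Hd HK. destruct (mvt_ex f df a b Hab Hd) as [c [Hc ->]].
  apply Rmult_le_compat_r; [lra| apply HK; lra].
Qed.

Lemma drop_contra (G : R -> R) T lb D : 0 < D ->
  (forall x y, T <= x <= y -> G y <= G x) -> (forall x, T <= x -> lb <= G x) ->
  (forall x, T <= x -> exists y, x <= y /\ G y <= G x - D) -> False.
Proof.
  intros HD Hmono Hlb Hstep.
  assert (forall n:nat, exists t, T <= t /\ G t <= G T - INR n * D) as Hn.
  { induction n. exists T. simpl. split; lra.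
    destruct IHn as [t [Ht HG]]. destruct (Hstep t Ht) as [y [Hy HGy]]. exists y.
    split. lra. rewrite S_INR. lra. }
  destruct (INR_archimed D (G T - lb) HD) as [n Hn'].
  destruct (Hn n) as [t [Ht HG]]. specialize (Hlb t Ht). lra.
Qed.

Lemma Rabs_le_2 x a : Rabs x <= a -> -a <= x <= a.
Proof. intros H. pose proof (Rle_abs x). pose proof (Rle_abs (-x)). rewrite Rabs_Ropp in H1. lra. Qed.
Definition dphi th et u := -3*u^2 + 2*(1-th)*u + (th - et) - th*et/u^2.
Lemma phi_derive th et u : 0 < u -> is_derive (phi th et) u (dphi th et u).
Proof. intros Hu. unfold phi, dphi. auto_derive. lra. field. lra. Qed.

Lemma dphi_neg_ge1 th et u : 0 < th -> 0 < et -> 1 <= u -> dphi th et u < 0.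
Proof.
  intros Ht He Hu. unfold dphi.
  assert (0 < th*et/u^2) by (apply Rdiv_lt_0_compat; [nra | apply pow_lt; lra]).
  nra.
Qed.

Lemma dphi_cont th et x : 0 < x -> continuity_pt (dphi th et) x.
Proof.
  intros Hx. assert (ex_derive (dphi th et) x) as [l Hl] by (unfold dphi; auto_derive; apply Rgt_not_eq; nra).
  exact (deriv_cont _ _ _ Hl).
Qed.

Lemma dphi_neg th et uM : 0 < th -> 0 < et -> 0 < uM < 1 ->
  (forall u, 0 < u < 1 -> is_derive (phi th et) u 0 -> u <= uM) ->
  forall u, uM < u -> dphi th et u < 0.
Proof.
  intros Ht He HuM Hcrit u Hu.
  destruct (Rle_lt_dec 1 u) as [H1|H1]. { apply dphi_neg_ge1; auto. }
  destruct (Rtotal_order (dphi th et u) 0) as [Hlt|[Heq|Hgt]]; auto; exfalso.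
  - assert (is_derive (phi th et) u 0) by (rewrite <- Heq; apply phi_derive; lra).
    specialize (Hcrit u ltac:(lra) H). lra.
  - destruct (first_reach (fun x => - dphi th et x) u 1 0) as [z [Hz [Hfz _]]]; auto.
    + intros x Hx. apply continuity_pt_opp. apply dphi_cont. lra.
    + lra.
    + pose proof (dphi_neg_ge1 th et 1 Ht He (Rle_refl 1)). lra.
    + assert (z <> 1). { intro E. subst z. pose proof (dphi_neg_ge1 th et 1 Ht He (Rle_refl 1)). lra. }
      assert (is_derive (phi th et) z 0).
      { replace 0 with (dphi th et z) by lra. apply phi_derive. lra. }
      specialize (Hcrit z ltac:(lra) H0). lra.
Qed.

Lemma dphi_uM_zero th et uM : 0 < uM -> is_derive (phi th et) uM 0 -> dphi th et uM = 0.
Proof.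
  intros Hu Hd. pose proof (phi_derive th et uM Hu) as H.
  apply is_derive_unique in H. apply is_derive_unique in Hd. congruence.
Qed.

Definition PH (d th et uM s : R) : Prop :=
  0 < d /\ 0 < th /\ 0 < et /\ 0 < uM /\ uM < s /\ s < 1 /\ d * (et + s^2) = s^2 /\
  (forall u, uM <= u -> dphi th et u <= 0) /\ (forall u, uM < u -> dphi th et u < 0).

Lemma PH_d1 d th et uM s : PH d th et uM s -> d < 1.
Proof. intros (Hd & Ht & He & HuM & Hs & Hs1 & Hds & _). nra. Qed.

Lemma phi_dec d th et uM s : PH d th et uM s -> forall x y, uM <= x < y -> phi th et y < phi th et x.
Proof.
  intros HP x y Hxy. destruct HP as (Hd & Ht & He & HuM & Hs & Hs1 & Hds & Hle & Hlt).
  set (m := (x+y)/2).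
  assert (H1 : phi th et m - phi th et x <= 0 * (m - x)).
  { apply mvt_upper with (df := dphi th et). unfold m; lra.
    intros z Hz. apply phi_derive. lra. intros z Hz. apply Hle. lra. }
  destruct (mvt_ex (phi th et) (dphi th et) m y) as [c [Hc Heq]]. unfold m; lra.
  intros z Hz. apply phi_derive. unfold m in Hz. lra.
  assert (dphi th et c < 0) by (apply Hlt; unfold m in Hc; lra).
  assert (0 < y - m) by (unfold m; lra). nra.
Qed.

Lemma phi_dec_le d th et uM s : PH d th et uM s -> forall x y, uM <= x <= y -> phi th et y <= phi th et x.
Proof.
  intros HP x y Hxy. destruct (Req_dec x y) as [->|]. lra.
  left. apply (phi_dec _ _ _ _ _ HP). lra.
Qed.

Lemma F1_eq th et u v : 0 < u -> F1 th et u v = u^2 * (phi th et u - v).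
Proof. intros Hu. unfold F1, phi. field. lra. Qed.

Lemma phi_lb th et s u : 0 < th -> 0 < et -> 0 < u <= s -> s < 1 ->
  (1 - s) * th * et / s <= phi th et u.
Proof.
  intros Ht He Hu Hs. unfold phi.
  assert (0 < /u) by (apply Rinv_0_lt_compat; lra).
  assert (/s <= /u) by (apply Rinv_le_contravar; lra).
  assert (0 < /s) by (apply Rinv_0_lt_compat; lra).
  assert (th*et <= (u+th)*(u^2+et)) by nra.
  assert ((1-s)*(th*et) <= (1-u)*((u+th)*(u^2+et))).
  { apply Rmult_le_compat; nra. }
  unfold Rdiv. 
  replace (/ u * (1 - u) * (u + th) * (u ^ 2 + et)) with (((1-u)*((u+th)*(u^2+et))) * /u) by ring.
  replace ((1 - s) * th * et * / s) with (((1-s)*(th*et)) * /s) by ring.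
  assert (0 <= (1-s)*(th*et)) by (apply Rmult_le_pos; nra).
  apply Rmult_le_compat; lra.
Qed.

Definition A0 (s x : R) := x + s^2/x - 2*s.
Definition Bf (vs y : R) := y - vs - vs * ln (y / vs).

Lemma A0_eq s x : 0 < x -> A0 s x = (x - s)^2 / x.
Proof. intros. unfold A0. field. lra. Qed.

Lemma A0_nonneg s x : 0 < x -> 0 <= A0 s x.
Proof. intros. rewrite A0_eq by auto. apply Rdiv_le_0_compat. apply pow2_ge_0. auto. Qed.

Lemma Bf_nonneg vs y : 0 < vs -> 0 < y -> 0 <= Bf vs y.
Proof.
  intros. unfold Bf. pose proof (ln_le_xm1 (y/vs) ltac:(apply Rdiv_lt_0_compat; lra)).
  assert (vs * ln (y/vs) <= vs * (y/vs - 1)) by (apply Rmult_le_compat_l; lra).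
  replace (vs * (y/vs - 1)) with (y - vs) in H2 by (field; lra). lra.
Qed.

Lemma Bf_pos vs y : 0 < vs -> 0 < y -> y <> vs -> 0 < Bf vs y.
Proof.
  intros. unfold Bf. pose proof (ln_lt_xm1 (y/vs) ltac:(apply Rdiv_lt_0_compat; lra)).
  assert (y / vs <> 1). { intro E. apply H1. assert (y = y/vs*vs) as E2 by (field; lra). rewrite E2, E. ring. }
  specialize (H2 H3).
  assert (vs * ln (y/vs) < vs * (y/vs - 1)) by (apply Rmult_lt_compat_l; lra).
  replace (vs * (y/vs - 1)) with (y - vs) in H4 by (field; lra). lra.
Qed.

Lemma Bf_ub vs y : 0 < vs -> 0 < y -> Bf vs y <= (y - vs)^2 / y.
Proof.
  intros. unfold Bf. pose proof (ln_ge_1m (y/vs) ltac:(apply Rdiv_lt_0_compat; lra)).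
  assert (vs * (1 - /(y/vs)) <= vs * ln (y/vs)) by (apply Rmult_le_compat_l; lra).
  replace (vs * (1 - /(y/vs))) with (vs - vs^2/y) in H2 by (field; lra).
  replace ((y - vs)^2/y) with (y - 2*vs + vs^2/y) by (field; lra). lra.
Qed.

Lemma Bf_inc vs a b : 0 < vs -> vs <= a <= b -> Bf vs a <= Bf vs b.
Proof.
  intros. unfold Bf.
  assert (ln (b/vs) = ln (a/vs) + ln (b/a)).
  { rewrite <- ln_mult. f_equal. field. split; lra. apply Rdiv_lt_0_compat; lra. apply Rdiv_lt_0_compat; lra. }
  rewrite H1. pose proof (ln_le_xm1 (b/a) ltac:(apply Rdiv_lt_0_compat; lra)).
  assert (vs * ln (b/a) <= vs * (b/a - 1)) by (apply Rmult_le_compat_l; lra).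
  assert (vs * (b/a - 1) <= b - a).
  { replace (vs * (b/a - 1)) with ((b - a) * (vs / a)) by (field; lra).
    assert (vs / a <= 1). { apply Rmult_le_reg_r with a. lra. unfold Rdiv. rewrite Rmult_assoc, Rinv_l; lra. }
    nra. }
  lra.
Qed.

Lemma Bf_dec vs a b : 0 < vs -> 0 < a <= b -> b <= vs -> Bf vs b <= Bf vs a.
Proof.
  intros. unfold Bf.
  assert (ln (b/vs) = ln (a/vs) + ln (b/a)).
  { rewrite <- ln_mult. f_equal. field. split; lra. apply Rdiv_lt_0_compat; lra. apply Rdiv_lt_0_compat; lra. }
  rewrite H2. pose proof (ln_ge_1m (b/a) ltac:(apply Rdiv_lt_0_compat; lra)).
  assert (vs * (1 - /(b/a)) <= vs * ln (b/a)) by (apply Rmult_le_compat_l; lra).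
  assert (b - a <= vs * (1 - /(b/a))).
  { replace (vs * (1 - /(b/a))) with ((b - a) * (vs / b)) by (field; lra).
    assert (1 <= vs / b). { apply Rmult_le_reg_r with b. lra. unfold Rdiv. rewrite Rmult_assoc, Rinv_l; lra. }
    nra. }
  lra.
Qed.

Lemma Bf_vbound vs y C : 0 < vs -> 0 < y -> Bf vs y <= C -> y <= 2 * (C + vs).
Proof.
  intros. unfold Bf in H1. pose proof (ln_le_half (y/vs) ltac:(apply Rdiv_lt_0_compat; lra)).
  assert (vs * ln (y/vs) <= vs * (y/vs/2)) by (apply Rmult_le_compat_l; lra).
  replace (vs * (y/vs/2)) with (y/2) in H3 by (field; lra). lra.
Qed.

Lemma comp_deriv (f g : R -> R) (x df dg : R) : is_derive f (g x) df -> is_derive g x dg ->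
  is_derive (fun y => f (g y)) x (dg * df).
Proof. intros. apply (is_derive_comp f g x df dg); auto. Qed.

Lemma is_derive_eq (f : R -> R) (x l l' : R) : is_derive f x l -> l = l' -> is_derive f x l'.
Proof. intros H ->. exact H. Qed.

Lemma A0_derive s x : 0 < x -> is_derive (A0 s) x (1 - s^2/x^2).
Proof. intros. unfold A0. auto_derive. lra. field. lra. Qed.

Lemma Bf_derive vs y : 0 < vs -> 0 < y -> is_derive (Bf vs) y (1 - vs/y).
Proof. intros. unfold Bf. auto_derive. apply Rdiv_lt_0_compat; lra. field. lra. Qed.

Lemma pos_gen (y g : R -> R) :
  (forall t, 0 <= t -> is_derive y t (y t * g t)) -> 0 < y 0 ->
  (forall s0, 0 < s0 -> (forall t, 0 <= t <= s0 -> 0 <= y t) ->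
     exists K, forall t, 0 <= t <= s0 -> - K <= g t) ->
  forall t, 0 <= t -> 0 < y t.
Proof.
  intros Hd Hy0 Hb t1 Ht1. destruct (Rlt_le_dec 0 (y t1)) as [|Hle]; auto. exfalso.
  assert (0 < t1) by (destruct (Req_dec t1 0) as [->|]; lra).
  destruct (first_reach (fun t => - y t) 0 t1 0) as [s0 [Hs0 [Hys0 Hbef]]]; auto.
  { intros x Hx. apply continuity_pt_opp. apply deriv_cont with (y x * g x). apply Hd. lra. }
  lra. lra.
  assert (Hnn : forall t, 0 <= t <= s0 -> 0 <= y t).
  { intros t Ht. destruct (Req_dec t s0) as [->|]. lra. specialize (Hbef t ltac:(lra)). lra. }
  destruct (Hb s0 ltac:(lra) Hnn) as [K HK].
  set (z := fun t => y t * exp (K * t)).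
  assert (Hz : forall t, 0 <= t <= s0 -> is_derive z t (y t * exp (K*t) * (g t + K))).
  { intros t Ht. unfold z.
    assert (He : is_derive (fun t => exp (K*t)) t (K * exp (K*t))) by (auto_derive; auto; ring).
    pose proof (is_derive_mult y (fun t => exp (K*t)) t _ _ (Hd t ltac:(lra)) He) as Hm.
    eapply is_derive_eq. apply Hm. intros; apply Rmult_comm.
    simpl. unfold plus, mult; simpl. ring. }
  pose proof (mvt_lower z _ 0 s0 0 ltac:(lra) Hz) as Hm.
  assert (0 * (s0 - 0) <= z s0 - z 0).
  { apply Hm. intros x Hx. specialize (HK x Hx). specialize (Hnn x Hx).
    pose proof (exp_pos (K*x)). apply Rmult_le_pos. apply Rmult_le_pos; lra. lra. }
  unfold z in H0. replace (y s0) with 0 in H0 by lra. rewrite Rmult_0_r, exp_0 in H0. lra.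
Qed.

Lemma sol_du d th et eps u v t : is_solution d th et eps u v -> 0 <= t ->
  is_derive u t (F1 th et (u t) (v t)).
Proof. intros H Ht. apply (H t Ht). Qed.

Lemma sol_dv d th et eps u v t : is_solution d th et eps u v -> 0 <= t ->
  is_derive v t (F2 d et eps (u t) (v t)).
Proof. intros H Ht. apply (H t Ht). Qed.

Lemma sol_cu d th et eps u v t : is_solution d th et eps u v -> 0 <= t -> continuity_pt u t.
Proof. intros H Ht. eapply deriv_cont. apply (sol_du _ _ _ _ _ _ _ H Ht). Qed.

Lemma sol_cv d th et eps u v t : is_solution d th et eps u v -> 0 <= t -> continuity_pt v t.
Proof. intros H Ht. eapply deriv_cont. apply (sol_dv _ _ _ _ _ _ _ H Ht). Qed.

Lemma sol_pos d th et eps u v : 0 < d < 1 -> 0 < th -> 0 < et -> 0 < eps ->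
  is_solution d th et eps u v -> 0 < u 0 -> 0 < v 0 ->
  forall t, 0 <= t -> 0 < u t /\ 0 < v t.
Proof.
  intros Hd Ht He Heps Hs Hu0 Hv0.
  assert (Hv : forall t, 0 <= t -> 0 < v t).
  { apply pos_gen with (g := fun t => eps*((u t)^2 - d*((u t)^2+et))); auto.
    - intros t Ht0. apply is_derive_eq with (l := F2 d et eps (u t) (v t)). apply (sol_dv _ _ _ _ _ _ _ Hs Ht0). unfold F2. ring.
    - intros s0 Hs0 _. exists (eps*d*et). intros t Ht0.
      assert (0 <= (u t)^2) by apply pow2_ge_0.
      assert (0 <= eps * ((1-d)*(u t)^2)) by (apply Rmult_le_pos; [lra|apply Rmult_le_pos; lra]).
      nra. }
  assert (Hu : forall t, 0 <= t -> 0 < u t).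
  { apply pos_gen with (g := fun t => (1 - u t)*(u t + th)*((u t)^2+et) - u t * v t); auto.
    - intros t Ht0. apply is_derive_eq with (l := F1 th et (u t) (v t)). apply (sol_du _ _ _ _ _ _ _ Hs Ht0). unfold F1. ring.
    - intros s0 Hs0 Hnn.
      destruct (continuity_ab_maj u 0 s0 ltac:(lra)) as [xu [Hxu Hxu']].
      { intros c Hc. apply (sol_cu _ _ _ _ _ _ _ Hs). lra. }
      destruct (continuity_ab_maj v 0 s0 ltac:(lra)) as [xv [Hxv Hxv']].
      { intros c Hc. apply (sol_cv _ _ _ _ _ _ _ Hs). lra. }
      set (Mu := u xu). set (Mv := v xv).
      exists (Mu*(Mu+th)*(Mu^2+et) + Mu*Mv). intros t Ht0.
      specialize (Hxu t Ht0). specialize (Hxv t Ht0). specialize (Hnn t Ht0).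
      pose proof (Hv t ltac:(lra)). fold Mu in Hxu. fold Mv in Hxv.
      set (w := u t) in *.
      assert (0 <= (w + th)*(w^2+et)) by (apply Rmult_le_pos; nra).
      assert ((1-w)*(w+th)*(w^2+et) >= - (w*((w+th)*(w^2+et)))) by nra.
      assert (w*((w+th)*(w^2+et)) <= Mu*((Mu+th)*(Mu^2+et))).
      { apply Rmult_le_compat; try lra. apply Rmult_le_compat; nra. }
      assert (w * v t <= Mu * Mv) by (apply Rmult_le_compat; lra).
      lra. }
  intros t Ht0. split; auto.
Qed.

Definition SOL d th et eps (u v : R -> R) :=
  is_solution d th et eps u v /\ forall t, 0 <= t -> 0 < u t /\ 0 < v t.

Lemma F1_neg_gt1 th et x y : 0 < th -> 0 < et -> 1 <= x -> 0 < y -> F1 th et x y < 0.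
Proof.
  intros. unfold F1.
  assert (0 < (x+th)*(x^2+et)) by (apply Rmult_lt_0_compat; nra).
  assert (x*(1-x) <= 0) by nra.
  assert (0 < x^2*y) by (apply Rmult_lt_0_compat; nra).
  assert (x * (1 - x) * (x + th) * (x ^ 2 + et) = (x*(1-x))*((x+th)*(x^2+et))) by ring.
  nra.
Qed.

Lemma u_le_max d th et eps u v : 0 < th -> 0 < et -> SOL d th et eps u v ->
  forall T t, 0 <= T <= t -> u t <= Rmax (u T) 1.
Proof.
  intros Ht He [Hs Hp] T t HTt. destruct (Rle_lt_dec (u t) (Rmax (u T) 1)) as [|Hgt]; auto. exfalso.
  pose proof (Rmax_l (u T) 1). pose proof (Rmax_r (u T) 1).
  assert (T < t) by (destruct (Req_dec T t) as [->|]; lra).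
  destruct (first_reach u T t (u t)) as [s0 [Hs0 [Hus0 Hbef]]]; auto.
  { intros x Hx. apply (sol_cu _ _ _ _ _ _ _ Hs). lra. } lra. lra.
  pose proof (deriv_reach_ge u s0 _ (s0 - T) (sol_du _ _ _ _ _ _ s0 Hs ltac:(lra)) ltac:(lra)) as Hd.
  assert (0 <= F1 th et (u s0) (v s0)).
  { apply Hd. intros x Hx. rewrite Hus0. apply Hbef. lra. }
  pose proof (F1_neg_gt1 th et (u s0) (v s0) Ht He ltac:(lra) (proj2 (Hp s0 ltac:(lra)))). lra.
Qed.

Lemma ev_le2 d th et eps u v : 0 < th -> 0 < et -> SOL d th et eps u v ->
  exists T2, 0 <= T2 /\ forall t, T2 <= t -> u t <= 2.
Proof.
  intros Ht He HS. pose proof HS as [Hs Hp].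
  assert (exists T, 0 <= T /\ u T <= 2) as [T [HT HuT]].
  { destruct (classic (exists T, 0 <= T /\ u T <= 2)) as [|Hn]; auto. exfalso.
    assert (Hall : forall T, 0 <= T -> 2 < u T).
    { intros T HT. destruct (Rlt_le_dec 2 (u T)); auto. exfalso. apply Hn. exists T; auto. }
    pose proof (Hp 0 (Rle_refl 0)) as [Hu0 _].
    assert (u (u 0) - u 0 <= (-1) * (u 0 - 0)).
    { apply mvt_upper with (df := fun t => F1 th et (u t) (v t)). lra.
      intros x Hx. apply (sol_du _ _ _ _ _ _ _ Hs). lra.
      intros x Hx. specialize (Hall x ltac:(lra)). pose proof (Hp x ltac:(lra)) as [_ Hv].
      unfold F1. set (w := u x) in *.
      assert (16 <= w*(w+th)*(w^2+et)).
      { assert (4 <= w*(w+th)) by nra. assert (4 <= w^2+et) by nra. nra. }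
      assert (0 <= w^2 * v x) by (apply Rmult_le_pos; nra).
      assert (w * (1 - w) * (w + th) * (w ^ 2 + et) = (1-w)*(w*(w+th)*(w^2+et))) by ring.
      nra. }
    specialize (Hall (u 0) ltac:(lra)). lra. }
  exists T. split; auto. intros t Ht0.
  pose proof (u_le_max d th et eps u v Ht He HS T t ltac:(lra)).
  revert H. apply Rmax_case; lra.
Qed.

Definition Hf d eps s vs x y := eps*(1-d)*A0 s x + Bf vs y.

Lemma d_expr d et s : 0 < et -> d * (et + s^2) = s^2 -> d = s^2/(et+s^2).
Proof.
  intros He Hds. assert (0 < et + s^2) by nra.
  apply Rmult_eq_reg_r with (et+s^2). unfold Rdiv. rewrite Rmult_assoc, Rinv_l; lra. lra.
Qed.

Lemma F2_eq d et eps s x y : 0 < et -> d * (et + s^2) = s^2 ->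
  F2 d et eps x y = eps*(1-d)*y*(x^2 - s^2).
Proof.
  intros He Hds. pose proof (d_expr d et s He Hds) as E. assert (0 < et + s^2) by nra.
  subst d. unfold F2. field. lra.
Qed.

Lemma H_derive d th et eps s u v t : 0 < et -> d * (et + s^2) = s^2 ->
  is_solution d th et eps u v -> 0 <= t -> 0 < u t -> 0 < v t -> 0 < phi th et s ->
  is_derive (fun t => Hf d eps s (phi th et s) (u t) (v t)) t
    (eps*(1-d)*((u t)^2 - s^2)*(phi th et (u t) - phi th et s)).
Proof.
  intros He Hds Hs Ht Hu Hv Hvs. set (vs := phi th et s).
  pose proof (comp_deriv (A0 s) u t _ _ (A0_derive s (u t) Hu) (sol_du _ _ _ _ _ _ _ Hs Ht)) as HA.
  pose proof (comp_deriv (Bf vs) v t _ _ (Bf_derive vs (v t) Hvs Hv) (sol_dv _ _ _ _ _ _ _ Hs Ht)) as HB.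
  pose proof (is_derive_scal _ t (eps*(1-d)) _ HA) as HA'.
  pose proof (is_derive_plus _ _ t _ _ HA' HB) as HH.
  unfold Hf. apply is_derive_eq with (l := eps * (1 - d) * (F1 th et (u t) (v t) * (1 - s ^ 2 / u t ^ 2)) +
      F2 d et eps (u t) (v t) * (1 - vs / v t)).
  exact HH.
  rewrite F2_eq with (s := s) by auto. rewrite F1_eq by auto. field. lra.
Qed.

Lemma Hdot_nonpos d th et uM s x : PH d th et uM s -> uM <= x ->
  (x^2 - s^2)*(phi th et x - phi th et s) <= 0.
Proof.
  intros HP Hx. pose proof HP as (Hd & Ht & He & HuM & Hs & Hs1 & Hds & _).
  destruct (Rle_lt_dec x s).
  - pose proof (phi_dec_le _ _ _ _ _ HP x s ltac:(lra)). assert (x^2 - s^2 <= 0) by nra. nra.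
  - pose proof (phi_dec_le _ _ _ _ _ HP s x ltac:(lra)). assert (0 <= x^2 - s^2) by nra. nra.
Qed.

Lemma phi_s_pos d th et uM s : PH d th et uM s -> 0 < phi th et s.
Proof.
  intros HP. pose proof HP as (Hd & Ht & He & HuM & Hs & Hs1 & Hds & _).
  pose proof (phi_lb th et s s Ht He ltac:(lra) Hs1).
  assert (0 < (1 - s) * th * et / s) by (apply Rdiv_lt_0_compat; [apply Rmult_lt_0_compat; [apply Rmult_lt_0_compat|];lra|lra]).
  lra.
Qed.

Lemma phi_uM_pos d th et uM s : PH d th et uM s -> phi th et s < phi th et uM.
Proof. intros HP. apply (phi_dec _ _ _ _ _ HP). pose proof HP as (Hd & Ht & He & HuM & Hs & _). lra. Qed.

Lemma H_mono d th et eps uM s u v a b : PH d th et uM s -> 0 < eps -> SOL d th et eps u v ->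
  0 <= a <= b -> (forall x, a <= x <= b -> uM <= u x) ->
  Hf d eps s (phi th et s) (u b) (v b) <= Hf d eps s (phi th et s) (u a) (v a).
Proof.
  intros HP Heps [Hs Hp] Hab Hx. pose proof HP as (Hd & Ht & He & HuM & Hsm & Hs1 & Hds & _).
  pose proof (PH_d1 _ _ _ _ _ HP).
  assert (Hf d eps s (phi th et s) (u b) (v b) - Hf d eps s (phi th et s) (u a) (v a) <= 0 * (b - a)).
  { apply (mvt_upper (fun t => Hf d eps s (phi th et s) (u t) (v t)) (fun t => eps*(1-d)*((u t)^2 - s^2)*(phi th et (u t) - phi th et s))).
    lra. intros x Hx'. apply H_derive; auto. lra. apply Hp; lra. apply Hp; lra. eapply phi_s_pos; eauto.
    intros x Hx'. pose proof (Hdot_nonpos _ _ _ _ _ (u x) HP (Hx x Hx')).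
    assert (0 <= eps*(1-d)) by (apply Rmult_le_pos; lra).
    replace (eps * (1 - d) * (u x ^ 2 - s ^ 2) * (phi th et (u x) - phi th et s)) with
      ((eps*(1-d)) * ((u x ^ 2 - s ^ 2) * (phi th et (u x) - phi th et s))) by ring.
    nra. }
  lra.
Qed.

Lemma H_ge_B d eps s vs x y : 0 < eps -> d < 1 -> 0 < x -> Bf vs y <= Hf d eps s vs x y.
Proof.
  intros. unfold Hf. pose proof (A0_nonneg s x H1).
  assert (0 <= eps*(1-d)*A0 s x) by (apply Rmult_le_pos; [apply Rmult_le_pos|]; lra). lra.
Qed.

Lemma trap d th et eps uM s u v t1 : PH d th et uM s -> 0 < eps -> SOL d th et eps u v ->
  0 <= t1 -> uM <= u t1 ->
  Hf d eps s (phi th et s) (u t1) (v t1) < Bf (phi th et s) (phi th et uM) ->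
  forall t, t1 <= t -> uM <= u t.
Proof.
  intros HP Heps HS Ht1 Hu1 HH t Ht. pose proof HS as [Hs Hp].
  pose proof HP as (Hd & Hth & He & HuM & Hsm & Hs1 & Hds & _). pose proof (PH_d1 _ _ _ _ _ HP).
  destruct (Rle_lt_dec uM (u t)) as [|Hlt]; auto. exfalso.
  assert (t1 < t) by (destruct (Req_dec t1 t) as [->|]; lra).
  destruct (first_exit u t1 t uM) as [s0 [Hs0 [Hus0 [Hall Hexit]]]]; auto.
  { intros x Hx. apply (sol_cu _ _ _ _ _ _ _ Hs). lra. }
  assert (HF : F1 th et (u s0) (v s0) <= 0).
  { apply (deriv_exit_le u s0). apply (sol_du _ _ _ _ _ _ _ Hs). lra.
    intros r Hr. destruct (Hexit r Hr) as [y [Hy1 [Hy2 Hy3]]]. exists y. split; auto. lra. }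
  rewrite F1_eq in HF by lra. rewrite Hus0 in HF.
  assert (0 < uM^2) by nra.
  assert (phi th et uM <= v s0) by nra.
  pose proof (phi_uM_pos _ _ _ _ _ HP). pose proof (phi_s_pos _ _ _ _ _ HP) as Hvs.
  pose proof (Bf_inc (phi th et s) (phi th et uM) (v s0) Hvs ltac:(lra)).
  pose proof (H_ge_B d eps s (phi th et s) (u s0) (v s0) Heps H ltac:(lra)).
  pose proof (H_mono d th et eps uM s u v t1 s0 HP Heps HS ltac:(lra) Hall).
  lra.
Qed.

Lemma exit_point d th et eps uM s u v t1 t : PH d th et uM s -> SOL d th et eps u v ->
  0 <= t1 -> uM <= u t1 -> t1 <= t -> u t < uM ->
  exists s0, t1 <= s0 < t /\ (forall x, t1 <= x <= s0 -> uM <= u x) /\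
    phi th et uM <= v s0 /\ (forall r, 0 < r -> exists y, s0 < y < s0 + r /\ u y < uM).
Proof.
  intros HP [Hs Hp] Ht1 Hu1 Ht Hlt.
  pose proof HP as (Hd & Hth & He & HuM & Hsm & Hs1 & Hds & _).
  assert (t1 < t) by (destruct (Req_dec t1 t) as [->|]; lra).
  destruct (first_exit u t1 t uM) as [s0 [Hs0 [Hus0 [Hall Hexit]]]]; auto.
  { intros x Hx. apply (sol_cu _ _ _ _ _ _ _ Hs). lra. }
  assert (HF : F1 th et (u s0) (v s0) <= 0).
  { apply (deriv_exit_le u s0). apply (sol_du _ _ _ _ _ _ _ Hs). lra.
    intros r Hr. destruct (Hexit r Hr) as [y [Hy1 [Hy2 Hy3]]]. exists y. split; auto. lra. }
  rewrite F1_eq in HF by lra. rewrite Hus0 in HF.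
  assert (0 < uM^2) by nra.
  exists s0. split; [lra|split; [auto|split]]. nra.
  intros r Hr. destruct (Hexit r Hr) as [y [Hy1 [Hy2 Hy3]]]. exists y. split; auto.
Qed.

Lemma enter_right d th et eps uM s u v T2 t1 : PH d th et uM s -> 0 < eps ->
  eps < Bf (phi th et s) (phi th et uM) * uM / 4 -> SOL d th et eps u v -> 0 <= T2 ->
  (forall t, T2 <= t -> u t <= 2) -> T2 <= t1 -> uM <= u t1 -> v t1 <= phi th et s ->
  forall t, t1 <= t -> uM <= u t.
Proof.
  intros HP Heps Heps0 HS HT2 Hle2 Ht1 Hu1 Hv1 t Ht.
  pose proof HS as [Hs Hp]. pose proof HP as (Hd & Hth & He & HuM & Hsm & Hs1 & Hds & _).
  pose proof (PH_d1 _ _ _ _ _ HP).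
  pose proof (phi_uM_pos _ _ _ _ _ HP). pose proof (phi_s_pos _ _ _ _ _ HP) as Hvs.
  destruct (Rle_lt_dec uM (u t)) as [|Hlt]; auto. exfalso.
  destruct (exit_point d th et eps uM s u v t1 t HP HS ltac:(lra) Hu1 Ht Hlt)
    as [s0 [Hs0 [Hall [Hvs0 Hexit]]]].
  assert (exists t3, t1 <= t3 <= s0 /\ v t3 = phi th et s) as [t3 [Ht3 Hvt3]].
  { destruct (Req_dec (v t1) (phi th et s)) as [E|Hne]. exists t1. split; auto. lra.
    assert (t1 < s0) by (destruct (Req_dec t1 s0) as [E|]; [subst; lra|lra]).
    destruct (first_reach v t1 s0 (phi th et s)) as [t3 [Ht3 [Hv3 _]]]; auto.
    { intros x Hx. apply (sol_cv _ _ _ _ _ _ _ Hs). lra. } lra. lra.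
    exists t3. split; auto. lra. }
  assert (Hu3 : uM <= u t3 <= 2) by (split; [apply Hall; lra| apply Hle2; lra]).
  assert (HH3 : Hf d eps s (phi th et s) (u t3) (v t3) < Bf (phi th et s) (phi th et uM)).
  { unfold Hf. rewrite Hvt3. unfold Bf at 1. rewrite Rdiv_diag by lra. rewrite ln_1.
    rewrite A0_eq by lra.
    assert ((u t3 - s)^2 <= 4) by nra.
    assert ((u t3 - s)^2 / u t3 <= 4 / uM).
    { unfold Rdiv. apply Rmult_le_compat; try lra. apply pow2_ge_0.
      left; apply Rinv_0_lt_compat; lra. apply Rinv_le_contravar; lra. }
    assert (0 <= (u t3 - s)^2 / u t3) by (apply Rdiv_le_0_compat; [apply pow2_ge_0|lra]).
    assert (eps * (1-d) * ((u t3 - s)^2 / u t3) <= eps * (4/uM)).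
    { apply Rmult_le_compat; try lra. apply Rmult_le_pos; lra. nra. }
    assert (eps * (4 / uM) < Bf (phi th et s) (phi th et uM)).
    { replace (eps * (4/uM)) with (eps * 4 / uM) by (field; lra).
      apply Rmult_lt_reg_r with uM. lra. unfold Rdiv. rewrite Rmult_assoc, Rinv_l by lra.
      unfold Rdiv in Heps0. lra. }
    lra. }
  pose proof (trap d th et eps uM s u v t3 HP Heps HS ltac:(lra) (proj1 Hu3) HH3) as Htr.
  destruct (Hexit 1 Rlt_0_1) as [y [Hy Huy]]. specialize (Htr y ltac:(lra)). lra.
Qed.

Definition conv (f : R -> R) (l : R) := forall e, 0 < e -> exists T, forall t, T <= t -> Rabs (f t - l) < e.

Lemma F1_bound th et x y V : 0 < th -> 0 < et -> 0 < x <= 2 -> 0 < y <= V ->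
  - (2*(2+th)*(4+et) + 4*V) <= F1 th et x y <= 2*(2+th)*(4+et) + 4*V.
Proof.
  intros Ht He Hx Hy. unfold F1.
  set (P := x*((x+th)*(x^2+et))).
  assert (0 <= P) by (unfold P; apply Rmult_le_pos; [lra|apply Rmult_le_pos; nra]).
  assert (P <= 2*((2+th)*(4+et))) by (unfold P; apply Rmult_le_compat; try lra;
    [apply Rmult_le_pos; nra | apply Rmult_le_compat; nra]).
  assert (x * (1 - x) * (x + th) * (x ^ 2 + et) = (1-x)*P) by (unfold P; ring).
  assert (0 <= x^2*y <= 4*V) by (split; [apply Rmult_le_pos; nra| apply Rmult_le_compat; nra]).
  assert (-P <= (1-x)*P <= P) by (split; nra).
  lra.
Qed.

Lemma lip f df a z L : a <= z -> (forall x, a <= x <= z -> is_derive f x (df x)) ->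
  (forall x, a <= x <= z -> - L <= df x <= L) -> Rabs (f z - f a) <= L * (z - a).
Proof.
  intros Haz Hd HL.
  pose proof (mvt_upper f df a z L Haz Hd ltac:(intros x Hx; apply HL; auto)).
  pose proof (mvt_lower f df a z (-L) Haz Hd ltac:(intros x Hx; apply HL; auto)).
  apply Rabs_le. lra.
Qed.

Lemma conv_v d th et eps uM s u v t1 V : PH d th et uM s -> 0 < eps -> SOL d th et eps u v ->
  0 <= t1 -> 0 < V -> (forall t, t1 <= t -> v t <= V /\ u t <= 2) -> conv u s ->
  conv v (phi th et s).
Proof.
  intros HP Heps [Hs Hp] Ht1 HV Hb Hcu rho Hrho.
  pose proof HP as (Hd & Hth & He & HuM & Hsm & Hs1 & Hds & _). pose proof (PH_d1 _ _ _ _ _ HP).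
  pose proof (phi_s_pos _ _ _ _ _ HP) as Hvs. set (vs := phi th et s) in *.
  destruct (classic (exists T, forall t, T <= t -> Rabs (v t - vs) < rho)) as [|Hn]; auto. exfalso.
  assert (Hn' : forall T, exists t, T <= t /\ rho <= Rabs (v t - vs)).
  { intros T. apply not_all_not_ex. intro Hc. apply Hn. exists T. intros t Ht.
    specialize (Hc t). apply Rnot_le_lt. intro Hle. apply Hc. auto. }
  set (Lv := 4*eps*V). assert (0 < Lv) by (unfold Lv; nra).
  set (tau := rho/(2*Lv)). assert (0 < tau) by (unfold tau; apply Rdiv_lt_0_compat; lra).
  assert (Hs0 : 0 < s) by lra.
  destruct (cont_ed (phi th et) s (deriv_cont _ _ _ (phi_derive th et s Hs0)) (rho/4) ltac:(lra)) as [k1 [Hk1 Hk1']].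
  set (kap := Rmin (Rmin (s/2) k1) (s^2*rho*tau/64)).
  assert (Hkap : 0 < kap /\ kap <= s/2 /\ kap <= k1 /\ kap <= s^2*rho*tau/64).
  { unfold kap. repeat split.
    - apply Rmin_case; [apply Rmin_case|]; try lra. assert (0 < s^2) by nra.
      apply Rdiv_lt_0_compat; [|lra]. apply Rmult_lt_0_compat; [apply Rmult_lt_0_compat|]; lra.
    - pose proof (Rmin_l (Rmin (s/2) k1) (s^2*rho*tau/64)). pose proof (Rmin_l (s/2) k1). lra.
    - pose proof (Rmin_l (Rmin (s/2) k1) (s^2*rho*tau/64)). pose proof (Rmin_r (s/2) k1). lra.
    - apply Rmin_r. }
  destruct Hkap as (Hk0 & Hk2 & Hk3 & Hk4).
  destruct (Hcu kap Hk0) as [T HT].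
  destruct (Hn' (Rmax T t1)) as [t [Ht Hvt]].
  pose proof (Rmax_l T t1). pose proof (Rmax_r T t1).
  assert (Hvz : forall z, t <= z <= t + tau -> Rabs (v z - v t) <= rho/2).
  { intros z Hz. eapply Rle_trans. apply (lip v (fun x => F2 d et eps (u x) (v x)) t z Lv). lra.
    intros x Hx. apply (sol_dv _ _ _ _ _ _ _ Hs). lra.
    intros x Hx. rewrite F2_eq with (s := s) by auto.
    destruct (Hb x ltac:(lra)) as [Hvx Hux]. destruct (Hp x ltac:(lra)) as [Hux0 Hvx0].
    assert (-1 <= (1-d)*((u x)^2 - s^2) <= 4).
    { assert (0 <= (u x)^2 <= 4) by (split; nra). assert (0 < s^2 < 1) by (split; nra).
      split; nra. }
    unfold Lv. split.
    + replace (eps * (1 - d) * v x * (u x ^ 2 - s ^ 2)) with (eps * v x * ((1 - d) * (u x ^ 2 - s ^ 2))) by ring.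
      assert (0 <= eps * v x) by nra.
      assert (eps * v x * ((1 - d) * (u x ^ 2 - s ^ 2)) >= eps * v x * (-1)) by nra.
      assert (eps * v x <= eps * V) by nra. nra.
    + replace (eps * (1 - d) * v x * (u x ^ 2 - s ^ 2)) with (eps * v x * ((1 - d) * (u x ^ 2 - s ^ 2))) by ring.
      assert (0 <= eps * v x) by nra.
      assert (eps * v x <= eps * V) by nra. nra.
    + unfold tau in Hz. assert (HLv : Lv * (z - t) <= Lv * (rho / (2*Lv))) by (apply Rmult_le_compat_l; lra).
      replace (Lv * (rho / (2*Lv))) with (rho/2) in HLv by (field; lra). lra. }
  assert (Huz : forall z, t <= z -> Rabs (u z - s) < kap) by (intros z Hz; apply HT; lra).
  assert (Hz1 : forall z, t <= z -> s/2 <= u z /\ Rabs (phi th et (u z) - vs) < rho/4).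
  { intros z Hz. specialize (Huz z Hz). apply Rabs_def2 in Huz. split. lra.
    apply Hk1'. apply Rabs_def1; lra. }
  pose proof (Huz t (Rle_refl t)) as Hut. pose proof (Huz (t+tau) ltac:(lra)) as Hutt.
  apply Rabs_def2 in Hut. apply Rabs_def2 in Hutt.
  assert (Hs2 : 0 < s^2) by nra.
  assert (Hsr : 0 < s^2*rho*tau/16) by (apply Rdiv_lt_0_compat; [apply Rmult_lt_0_compat; [apply Rmult_lt_0_compat|]|]; lra).
  destruct (Rle_lt_dec 0 (v t - vs)) as [Hpos|Hneg].
  - rewrite Rabs_right in Hvt by lra.
    assert (u (t+tau) - u t <= (- (s^2*rho/16)) * (t + tau - t)).
    { apply mvt_upper with (df := fun x => F1 th et (u x) (v x)). lra.
      intros x Hx. apply (sol_du _ _ _ _ _ _ _ Hs). lra.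
      intros x Hx. destruct (Hz1 x ltac:(lra)) as [Hux Hphx]. pose proof (Hvz x Hx) as Hvx.
      apply Rabs_le_2 in Hvx. apply Rabs_def2 in Hphx. rewrite F1_eq by lra.
      assert (phi th et (u x) - v x <= - (rho/4)) by lra.
      assert (s^2/4 <= (u x)^2) by nra. nra. }
    replace (t + tau - t) with tau in H3 by ring. nra.
  - rewrite Rabs_left in Hvt by lra.
    assert ((s^2*rho/16) * (t + tau - t) <= u (t+tau) - u t).
    { apply mvt_lower with (df := fun x => F1 th et (u x) (v x)). lra.
      intros x Hx. apply (sol_du _ _ _ _ _ _ _ Hs). lra.
      intros x Hx. destruct (Hz1 x ltac:(lra)) as [Hux Hphx]. pose proof (Hvz x Hx) as Hvx.
      apply Rabs_le_2 in Hvx. apply Rabs_def2 in Hphx. rewrite F1_eq by lra.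
      assert (rho/4 <= phi th et (u x) - v x) by lra.
      assert (s^2/4 <= (u x)^2) by nra. nra. }
    replace (t + tau - t) with tau in H3 by ring. nra.
Qed.

Lemma not_conv f l : ~ conv f l -> exists g, 0 < g /\ forall T, exists t, T <= t /\ g <= Rabs (f t - l).
Proof.
  intros Hn. unfold conv in Hn. apply not_all_ex_not in Hn. destruct Hn as [g Hg].
  exists g. apply imply_to_and in Hg. destruct Hg as [Hg Hg']. split; auto.
  intros T. apply not_all_not_ex. intro Hc. apply Hg'. exists T. intros t Ht.
  specialize (Hc t). apply Rnot_le_lt. intro Hle. apply Hc. auto.
Qed.

Lemma right_conv d th et eps uM s u v t1 : PH d th et uM s -> 0 < eps -> SOL d th et eps u v ->
  0 <= t1 -> (forall t, t1 <= t -> uM <= u t /\ u t <= 2) ->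
  conv u s /\ conv v (phi th et s).
Proof.
  intros HP Heps HS Ht1 Hb. pose proof HS as [Hs Hp].
  pose proof HP as (Hd & Hth & He & HuM & Hsm & Hs1 & Hds & _). pose proof (PH_d1 _ _ _ _ _ HP).
  pose proof (phi_s_pos _ _ _ _ _ HP) as Hvs. set (vs := phi th et s) in *.
  set (G := fun t => Hf d eps s vs (u t) (v t)).
  assert (Gmono : forall x y, t1 <= x <= y -> G y <= G x).
  { intros x y Hxy. apply (H_mono d th et eps uM s u v x y HP Heps HS). lra.
    intros z Hz. apply Hb. lra. }
  assert (Gpos : forall x, t1 <= x -> 0 <= G x).
  { intros x Hx. destruct (Hp x ltac:(lra)). unfold G.
    pose proof (H_ge_B d eps s vs (u x) (v x) Heps H H0). pose proof (Bf_nonneg vs (v x) Hvs H1). lra. }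
  set (V := 2 * (G t1 + vs)).
  assert (HV : 0 < V) by (unfold V; pose proof (Gpos t1 (Rle_refl _)); lra).
  assert (HvV : forall t, t1 <= t -> v t <= V).
  { intros t Ht. destruct (Hp t ltac:(lra)). apply Bf_vbound; auto.
    pose proof (H_ge_B d eps s vs (u t) (v t) Heps H H0). pose proof (Gmono t1 t ltac:(lra)).
    unfold G in *. lra. }
  assert (Hcu : conv u s).
  { destruct (classic (conv u s)) as [|Hn]; auto. exfalso.
    destruct (not_conv _ _ Hn) as [g0 [Hg0 Hg0']].
    set (g := Rmin g0 (s - uM)).
    assert (Hg : 0 < g /\ g <= g0 /\ g <= s - uM) by
      (unfold g; repeat split; [apply Rmin_case; lra| apply Rmin_l| apply Rmin_r]).
    destruct Hg as (Hg & Hgg0 & Hgs).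
    set (L := 2*(2+th)*(4+et) + 4*V). assert (HL : 0 < L) by (unfold L; nra).
    set (tau := g/(2*L)). assert (Htau : 0 < tau) by (unfold tau; apply Rdiv_lt_0_compat; lra).
    set (a1 := s - g/2). set (a2 := s + g/2).
    assert (Ha1 : uM < a1 < s) by (unfold a1; lra).
    assert (Hp1 : vs < phi th et a1) by (apply (phi_dec _ _ _ _ _ HP); lra).
    assert (Hp2 : phi th et a2 < vs) by (apply (phi_dec _ _ _ _ _ HP); unfold a2; lra).
    set (c1 := (s^2 - a1^2)*(phi th et a1 - vs)).
    set (c2 := (a2^2 - s^2)*(vs - phi th et a2)).
    assert (Hc1 : 0 < c1) by (unfold c1; apply Rmult_lt_0_compat; nra).
    assert (Hc2 : 0 < c2) by (unfold c2; apply Rmult_lt_0_compat; [unfold a2; nra | lra]).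
    set (c := Rmin c1 c2). assert (Hc : 0 < c /\ c <= c1 /\ c <= c2) by
      (unfold c; repeat split; [apply Rmin_case; lra| apply Rmin_l| apply Rmin_r]).
    destruct Hc as (Hc & Hcc1 & Hcc2).
    assert (Hk : 0 < eps*(1-d)) by (apply Rmult_lt_0_compat; lra).
    apply (drop_contra G t1 0 (eps*(1-d)*c*tau)).
    { apply Rmult_lt_0_compat; [apply Rmult_lt_0_compat|]; lra. }
    exact Gmono. exact Gpos.
    intros x Hx. destruct (Hg0' x) as [t [Ht Hut]].
    exists (t + tau). split. lra.
    assert (Huz : forall z, t <= z <= t + tau -> Rabs (u z - u t) <= g/2).
    { intros z Hz. eapply Rle_trans. apply (lip u (fun x => F1 th et (u x) (v x)) t z L). lra.
      intros y Hy. apply (sol_du _ _ _ _ _ _ _ Hs). lra.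
      intros y Hy. destruct (Hp y ltac:(lra)). destruct (Hb y ltac:(lra)).
      apply F1_bound; auto; split; auto. apply HvV; lra.
      unfold tau in Hz. assert (HLv : L * (z - t) <= L * (g / (2*L))) by (apply Rmult_le_compat_l; lra).
      replace (L * (g / (2*L))) with (g/2) in HLv by (field; lra). lra. }
    assert (Hder : forall z, t <= z <= t + tau ->
      eps*(1-d)*((u z)^2 - s^2)*(phi th et (u z) - vs) <= - (eps*(1-d)*c)).
    { intros z Hz. pose proof (Huz z Hz) as Hz'. apply Rabs_le_2 in Hz'.
      destruct (Hb z ltac:(lra)) as [Hz1 Hz2].
      replace (eps * (1 - d) * (u z ^ 2 - s ^ 2) * (phi th et (u z) - vs)) with
        (eps * (1 - d) * ((u z ^ 2 - s ^ 2) * (phi th et (u z) - vs))) by ring.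
      replace (- (eps * (1 - d) * c)) with (eps * (1 - d) * (- c)) by ring.
      apply Rmult_le_compat_l. lra.
      destruct (Rle_lt_dec 0 (u t - s)) as [Hpos|Hneg].
      - rewrite Rabs_right in Hut by lra.
        assert (a2 <= u z) by (unfold a2; lra).
        pose proof (phi_dec_le _ _ _ _ _ HP a2 (u z) ltac:(unfold a2; lra)).
        assert (a2^2 - s^2 <= (u z)^2 - s^2) by (unfold a2 in *; nra).
        assert (0 < a2^2 - s^2) by (unfold a2; nra).
        assert (Hm : (a2^2 - s^2)*(vs - phi th et a2) <= ((u z)^2 - s^2)*(vs - phi th et (u z))).
        { apply Rmult_le_compat; lra. }
        fold c2 in Hm. nra.
      - rewrite Rabs_left in Hut by lra.
        assert (u z <= a1) by (unfold a1; lra).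
        pose proof (phi_dec_le _ _ _ _ _ HP (u z) a1 ltac:(lra)).
        assert (s^2 - a1^2 <= s^2 - (u z)^2) by nra.
        assert (0 < s^2 - a1^2) by nra.
        assert (Hm : (s^2 - a1^2)*(phi th et a1 - vs) <= (s^2 - (u z)^2)*(phi th et (u z) - vs)).
        { apply Rmult_le_compat; lra. }
        fold c1 in Hm. nra. }
    assert (HG : G (t+tau) - G t <= (- (eps*(1-d)*c)) * (t + tau - t)).
    { apply mvt_upper with (df := fun z => eps*(1-d)*((u z)^2 - s^2)*(phi th et (u z) - vs)). lra.
      intros z Hz. unfold G, vs. apply H_derive; auto. lra. apply Hp; lra. apply Hp; lra.
      exact Hder. }
    pose proof (Gmono x t ltac:(lra)). replace (t + tau - t) with tau in HG by ring. lra. }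
  split; auto.
  apply (conv_v d th et eps uM s u v t1 V HP Heps HS Ht1 HV); auto.
  intros t Ht. split. apply HvV; auto. apply Hb; auto.
Qed.

Lemma left_conv d th et eps uM s u v T1 : PH d th et uM s -> 0 < eps -> SOL d th et eps u v ->
  0 <= T1 -> (forall t, T1 <= t -> u t < s) ->
  conv u s /\ conv v (phi th et s).
Proof.
  intros HP Heps HS HT1 Hb. pose proof HS as [Hs Hp].
  pose proof HP as (Hd & Hth & He & HuM & Hsm & Hs1 & Hds & _). pose proof (PH_d1 _ _ _ _ _ HP).
  pose proof (phi_s_pos _ _ _ _ _ HP) as Hvs. set (vs := phi th et s) in *.
  assert (Hk : 0 < eps*(1-d)) by (apply Rmult_lt_0_compat; lra).
  assert (Hvd : forall x, T1 <= x -> F2 d et eps (u x) (v x) <= 0).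
  { intros x Hx. rewrite F2_eq with (s := s) by auto. destruct (Hp x ltac:(lra)).
    specialize (Hb x Hx). assert ((u x)^2 - s^2 <= 0) by nra.
    assert (0 <= eps*(1-d)*v x) by (apply Rmult_le_pos; lra). nra. }
  assert (Vmono : forall x y, T1 <= x <= y -> v y <= v x).
  { intros x y Hxy. assert (v y - v x <= 0 * (y - x)).
    { apply mvt_upper with (df := fun z => F2 d et eps (u z) (v z)). lra.
      intros z Hz. apply (sol_dv _ _ _ _ _ _ _ Hs). lra. intros z Hz. apply Hvd. lra. }
    lra. }
  set (m0 := (1 - s) * th * et / s).
  assert (Hm0 : 0 < m0) by (unfold m0; apply Rdiv_lt_0_compat; [apply Rmult_lt_0_compat; [apply Rmult_lt_0_compat|]|]; lra).
  assert (Vlb : forall t, T1 <= t -> m0 <= v t).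
  { intros t Ht. destruct (Rle_lt_dec m0 (v t)) as [|Hlt]; auto. exfalso.
    destruct (Hp t ltac:(lra)) as [Hut Hvt].
    assert (Hphi : forall z, T1 <= z -> m0 <= phi th et (u z)).
    { intros z Hz. destruct (Hp z ltac:(lra)). apply phi_lb; auto. split; auto. left; apply Hb; auto. }
    assert (Hinc : forall z, t <= z -> u t <= u z).
    { intros z Hz. assert (0 * (z - t) <= u z - u t).
      { apply mvt_lower with (df := fun y => F1 th et (u y) (v y)). lra.
        intros y Hy. apply (sol_du _ _ _ _ _ _ _ Hs). lra.
        intros y Hy. destruct (Hp y ltac:(lra)). rewrite F1_eq by lra.
        pose proof (Hphi y ltac:(lra)). pose proof (Vmono t y ltac:(lra)).
        apply Rmult_le_pos. nra. lra. }
      lra. }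
    set (al := (u t)^2 * (m0 - v t)). assert (Hal : 0 < al) by (unfold al; apply Rmult_lt_0_compat; nra).
    assert (al * (t + s/al - t) <= u (t + s/al) - u t).
    { apply mvt_lower with (df := fun y => F1 th et (u y) (v y)).
      assert (0 < s/al) by (apply Rdiv_lt_0_compat; lra). lra.
      intros y Hy. apply (sol_du _ _ _ _ _ _ _ Hs). lra.
      intros y Hy. assert (0 < s/al) by (apply Rdiv_lt_0_compat; lra).
      destruct (Hp y ltac:(lra)). rewrite F1_eq by lra.
      pose proof (Hphi y ltac:(lra)). pose proof (Vmono t y ltac:(lra)). pose proof (Hinc y ltac:(lra)).
      unfold al. assert ((u t)^2 <= (u y)^2) by nra.
      apply Rmult_le_compat; nra. }
    replace (al * (t + s/al - t)) with s in H0 by (field; lra).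
    assert (0 < s/al) by (apply Rdiv_lt_0_compat; lra).
    specialize (Hb (t + s/al) ltac:(lra)). lra. }
  set (V := v T1). assert (HV : 0 < V) by (unfold V; apply Hp; lra).
  assert (HvV : forall t, T1 <= t -> v t <= V) by (intros t Ht; apply Vmono; lra).
  assert (Hcu : conv u s).
  { destruct (classic (conv u s)) as [|Hn]; auto. exfalso.
    destruct (not_conv _ _ Hn) as [g [Hg Hg']].
    assert (Hgs : g < s).
    { destruct (Hg' T1) as [t0 [Ht0 Hu0]]. specialize (Hb t0 Ht0). destruct (Hp t0 ltac:(lra)).
      rewrite Rabs_left in Hu0 by lra. lra. }
    set (L := 2*(2+th)*(4+et) + 4*V). assert (HL : 0 < L) by (unfold L; nra).
    set (tau := g/(2*L)). assert (Htau : 0 < tau) by (unfold tau; apply Rdiv_lt_0_compat; lra).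
    set (a1 := s - g/2). assert (Ha1 : 0 < a1 < s) by (unfold a1; lra).
    set (c1 := s^2 - a1^2). assert (Hc1 : 0 < c1) by (unfold c1; nra).
    apply (drop_contra v T1 m0 (eps*(1-d)*m0*c1*tau)).
    { apply Rmult_lt_0_compat; [apply Rmult_lt_0_compat; [apply Rmult_lt_0_compat|]|]; lra. }
    intros x y Hxy. apply Vmono; lra. exact Vlb.
    intros x Hx. destruct (Hg' x) as [t [Ht Hut]].
    exists (t + tau). split. lra.
    assert (Huz : forall z, t <= z <= t + tau -> Rabs (u z - u t) <= g/2).
    { intros z Hz. eapply Rle_trans. apply (lip u (fun x => F1 th et (u x) (v x)) t z L). lra.
      intros y Hy. apply (sol_du _ _ _ _ _ _ _ Hs). lra.
      intros y Hy. destruct (Hp y ltac:(lra)). pose proof (Hb y ltac:(lra)).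
      apply F1_bound; auto; split; auto; try lra. apply HvV; lra.
      unfold tau in Hz. assert (HLv : L * (z - t) <= L * (g / (2*L))) by (apply Rmult_le_compat_l; lra).
      replace (L * (g / (2*L))) with (g/2) in HLv by (field; lra). lra. }
    assert (HG : v (t+tau) - v t <= (- (eps*(1-d)*m0*c1)) * (t + tau - t)).
    { apply mvt_upper with (df := fun z => F2 d et eps (u z) (v z)). lra.
      intros z Hz. apply (sol_dv _ _ _ _ _ _ _ Hs). lra.
      intros z Hz. rewrite F2_eq with (s := s) by auto.
      pose proof (Huz z Hz) as Hz'. apply Rabs_le_2 in Hz'.
      pose proof (Hb t ltac:(lra)). rewrite Rabs_left in Hut by lra.
      destruct (Hp z ltac:(lra)). pose proof (Vlb z ltac:(lra)).
      assert (u z <= a1) by (unfold a1; lra).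
      assert ((u z)^2 - s^2 <= - c1) by (unfold c1; nra).
      assert (v z * ((u z)^2 - s^2) <= m0 * (- c1)) by nra.
      replace (eps * (1 - d) * v z * (u z ^ 2 - s ^ 2)) with (eps*(1-d) * (v z * ((u z)^2 - s^2))) by ring.
      replace (- (eps * (1 - d) * m0 * c1)) with (eps*(1-d) * (m0 * (-c1))) by ring.
      apply Rmult_le_compat_l; lra. }
    pose proof (Vmono x t ltac:(lra)). replace (t + tau - t) with tau in HG by ring. lra. }
  split; auto.
  apply (conv_v d th et eps uM s u v T1 V HP Heps HS HT1 HV); auto.
  intros t Ht. split. apply HvV; auto. specialize (Hb t Ht). lra.
Qed.

Lemma sol_conv d th et eps uM s u v : PH d th et uM s -> 0 < eps ->
  eps < Bf (phi th et s) (phi th et uM) * uM / 4 -> SOL d th et eps u v ->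
  conv u s /\ conv v (phi th et s).
Proof.
  intros HP Heps Heps0 HS. pose proof HS as [Hs Hp].
  pose proof HP as (Hd & Hth & He & HuM & Hsm & Hs1 & Hds & _). pose proof (PH_d1 _ _ _ _ _ HP).
  pose proof (phi_s_pos _ _ _ _ _ HP) as Hvs.
  destruct (ev_le2 d th et eps u v Hth He HS) as [T2 [HT2 Hle2]].
  destruct (classic (exists t1, T2 <= t1 /\ uM <= u t1 /\ v t1 <= phi th et s)) as [[t1 [Ht1 [Hu1 Hv1]]]|Hn].
  - pose proof (enter_right d th et eps uM s u v T2 t1 HP Heps Heps0 HS HT2 Hle2 Ht1 Hu1 Hv1) as Hr.
    apply (right_conv d th et eps uM s u v t1 HP Heps HS ltac:(lra)).
    intros t Ht. split. apply Hr; auto. apply Hle2; lra.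
  - assert (Hc2 : forall t, T2 <= t -> uM <= u t -> phi th et s < v t).
    { intros t Ht Hut. destruct (Rlt_le_dec (phi th et s) (v t)) as [|Hle]; auto. exfalso.
      apply Hn. exists t. auto. }
    assert (exists T1, T2 <= T1 /\ u T1 < s) as [T1 [HT1 HuT1]].
    { destruct (classic (exists T1, T2 <= T1 /\ u T1 < s)) as [|Hn2]; auto. exfalso.
      assert (Hge : forall t, T2 <= t -> s <= u t).
      { intros t Ht. destruct (Rle_lt_dec s (u t)); auto. exfalso. apply Hn2. exists t; auto. }
      assert (Hv2 : phi th et s < v T2) by (apply Hc2; [lra| pose proof (Hge T2 ltac:(lra)); lra]).
      assert (Vmono : forall y, T2 <= y -> v T2 <= v y).
      { intros y Hy. assert (0 * (y - T2) <= v y - v T2).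
        { apply mvt_lower with (df := fun z => F2 d et eps (u z) (v z)). lra.
          intros z Hz. apply (sol_dv _ _ _ _ _ _ _ Hs). lra.
          intros z Hz. rewrite F2_eq with (s := s) by auto. destruct (Hp z ltac:(lra)).
          pose proof (Hge z ltac:(lra)). assert (0 <= (u z)^2 - s^2) by nra.
          assert (0 <= eps*(1-d)*v z) by (apply Rmult_le_pos; [apply Rmult_le_pos|]; lra). nra. }
        lra. }
      set (be := s^2 * (v T2 - phi th et s)). assert (Hbe : 0 < be) by (unfold be; apply Rmult_lt_0_compat; nra).
      destruct (Hp T2 HT2) as [HuT2 _].
      assert (u (T2 + u T2/be) - u T2 <= (- be) * (T2 + u T2/be - T2)).
      { apply mvt_upper with (df := fun z => F1 th et (u z) (v z)).
        assert (0 < u T2 / be) by (apply Rdiv_lt_0_compat; lra). lra.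
        intros z Hz. apply (sol_du _ _ _ _ _ _ _ Hs). lra.
        intros z Hz. assert (0 < u T2 / be) by (apply Rdiv_lt_0_compat; lra).
        destruct (Hp z ltac:(lra)). rewrite F1_eq by lra.
        pose proof (Hge z ltac:(lra)). pose proof (Vmono z ltac:(lra)).
        pose proof (phi_dec_le _ _ _ _ _ HP s (u z) ltac:(lra)).
        assert (s^2 <= (u z)^2) by nra. unfold be. nra. }
      replace ((- be) * (T2 + u T2/be - T2)) with (- u T2) in H0 by (field; lra).
      assert (0 < u T2 / be) by (apply Rdiv_lt_0_compat; lra).
      destruct (Hp (T2 + u T2/be) ltac:(lra)). lra. }
    assert (Hlt : forall t, T1 <= t -> u t < s).
    { intros t Ht. destruct (Rlt_le_dec (u t) s) as [|Hge]; auto. exfalso.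
      assert (T1 < t) by (destruct (Req_dec T1 t) as [->|]; lra).
      destruct (first_reach u T1 t s) as [s0 [Hs0 [Hus0 Hbef]]]; auto.
      { intros x Hx. apply (sol_cu _ _ _ _ _ _ _ Hs). lra. }
      assert (HF : 0 <= F1 th et (u s0) (v s0)).
      { apply (deriv_reach_ge u s0 _ (s0 - T1)). apply (sol_du _ _ _ _ _ _ _ Hs). lra. lra.
        intros x Hx. rewrite Hus0. apply Hbef. lra. }
      rewrite F1_eq in HF by lra. rewrite Hus0 in HF.
      assert (v s0 <= phi th et s).
      { destruct (Rle_lt_dec (v s0) (phi th et s)) as [|Hc]; auto. exfalso. assert (0 < s^2) by nra.
        assert (0 < s^2 * (v s0 - phi th et s)) by (apply Rmult_lt_0_compat; lra). lra. }
      pose proof (Hc2 s0 ltac:(lra) ltac:(lra)). lra. }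
    apply (left_conv d th et eps uM s u v T1 HP Heps HS ltac:(lra) Hlt).
Qed.

Lemma conv_lim f l : conv f l -> is_lim f p_infty l.
Proof.
  intros H. apply is_lim_spec. simpl. intros e. destruct (H e (cond_pos e)) as [T HT].
  exists T. intros x Hx. apply HT. lra.
Qed.

Lemma sq_lt_abs x dd : 0 < dd -> x^2 < dd^2 -> Rabs x < dd.
Proof.
  intros Hd H. destruct (Rlt_le_dec (Rabs x) dd) as [|Hle]; auto. exfalso.
  rewrite <- (pow2_abs x) in H. nra.
Qed.

Theorem theorem6 (delta theta eta uM : R) :
  0 < delta -> 0 < theta -> 0 < eta ->
  in_region eta theta ->
  0 < uM < 1 ->
  is_derive (phi theta eta) uM 0 ->
  (forall u, 0 < u < 1 -> is_derive (phi theta eta) u 0 -> u <= uM) ->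
  delta < / (1 + eta) ->
  uM < ustar delta eta ->
  exists eps0, 0 < eps0 /\
    forall eps, 0 < eps < eps0 ->
      globally_stable delta theta eta eps (ustar delta eta) (vstar delta theta eta).
Proof.
  intros Hd Hth He _ HuM HduM Hcrit Hdel HuMs.
  assert (Hd1 : delta * (1 + eta) < 1).
  { apply Rmult_lt_compat_r with (r := 1 + eta) in Hdel; [|lra]. rewrite Rinv_l in Hdel; lra. }
  assert (Hd1' : delta < 1) by nra.
  set (q := delta * eta / (1 - delta)).
  assert (Hq : 0 < q < 1).
  { unfold q. split. apply Rdiv_lt_0_compat; nra.
    apply Rmult_lt_reg_r with (1 - delta). lra. unfold Rdiv. rewrite Rmult_assoc, Rinv_l; lra. }
  set (s := ustar delta eta). unfold vstar. fold s. fold s in HuMs.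
  assert (Hs2 : s^2 = q) by (unfold s, ustar; fold q; rewrite <- Rsqr_pow2; apply Rsqr_sqrt; lra).
  assert (Hs0 : 0 < s) by (unfold s, ustar; apply sqrt_lt_R0; fold q; lra).
  assert (Hs1 : s < 1).
  { unfold s, ustar. fold q. rewrite <- sqrt_1. apply sqrt_lt_1; lra. }
  assert (Hds : delta * (eta + s^2) = s^2).
  { rewrite Hs2. unfold q. field. lra. }
  assert (HP : PH delta theta eta uM s).
  { unfold PH. repeat split; auto; try lra.
    - intros u Hu. destruct (Req_dec u uM) as [->|]. rewrite dphi_uM_zero; auto; lra.
      left. apply (dphi_neg theta eta uM); auto. lra.
    - intros u Hu. apply (dphi_neg theta eta uM); auto. }
  pose proof (phi_s_pos _ _ _ _ _ HP) as Hvs. pose proof (phi_uM_pos _ _ _ _ _ HP) as HvM.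
  set (vs := phi theta eta s) in *. set (vM := phi theta eta uM) in *.
  assert (Hb1 : 0 < Bf vs vM) by (apply Bf_pos; lra).
  set (eps0 := Rmin 1 (Bf vs vM * uM / 4)).
  assert (He0 : 0 < eps0 /\ eps0 <= 1 /\ eps0 <= Bf vs vM * uM / 4).
  { unfold eps0. repeat split; [apply Rmin_case; [lra| apply Rdiv_lt_0_compat; nra] | apply Rmin_l | apply Rmin_r]. }
  destruct He0 as (He0 & He01 & He02).
  exists eps0. split; auto. intros eps Heps. split.
  -
    intros e He_.
    assert (Hk : 0 < eps*(1-delta) <= 1) by (split; [apply Rmult_lt_0_compat|]; nra).
    set (rho := Rmin (e/2) (vs/2)).
    assert (Hrho : 0 < rho /\ rho <= e/2 /\ rho <= vs/2) by
      (unfold rho; repeat split; [apply Rmin_case; lra | apply Rmin_l | apply Rmin_r]).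
    destruct Hrho as (Hr0 & Hr1 & Hr2).
    assert (Hb2 : 0 < Bf vs (vs + rho)) by (apply Bf_pos; lra).
    assert (Hb3 : 0 < Bf vs (vs - rho)) by (apply Bf_pos; lra).
    set (b4 := eps*(1-delta)*e^2/4). assert (Hb4 : 0 < b4) by (unfold b4; assert (0 < e^2) by nra; nra).
    set (h := Rmin (Rmin (Bf vs vM) (Bf vs (vs + rho))) (Rmin (Bf vs (vs - rho)) b4)).
    assert (Hh : 0 < h /\ h <= Bf vs vM /\ h <= Bf vs (vs + rho) /\ h <= Bf vs (vs - rho) /\ h <= b4).
    { unfold h. repeat split.
      - apply Rmin_glb_lt; apply Rmin_glb_lt; auto.
      - eapply Rle_trans; [apply Rmin_l|apply Rmin_l].
      - eapply Rle_trans; [apply Rmin_l|apply Rmin_r].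
      - eapply Rle_trans; [apply Rmin_r|apply Rmin_l].
      - eapply Rle_trans; [apply Rmin_r|apply Rmin_r]. }
    destruct Hh as (Hh0 & Hh1 & Hh2 & Hh3 & Hh4).
    set (C := 1/uM + 2/vs).
    assert (HC : 0 < C) by (unfold C; assert (0 < 1/uM) by (apply Rdiv_lt_0_compat; lra);
      assert (0 < 2/vs) by (apply Rdiv_lt_0_compat; lra); lra).
    set (d0 := Rmin (Rmin 1 ((s-uM)/2)) (Rmin ((1-s)/2) (Rmin (vs/2) (h/C)))).
    assert (Hd0 : 0 < d0 /\ d0 <= 1 /\ d0 <= (s-uM)/2 /\ d0 <= (1-s)/2 /\ d0 <= vs/2 /\ d0 <= h/C).
    { assert (0 < h/C) by (apply Rdiv_lt_0_compat; lra).
      unfold d0. repeat split.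
      - apply Rmin_glb_lt; [apply Rmin_glb_lt|apply Rmin_glb_lt; [|apply Rmin_glb_lt]]; lra.
      - eapply Rle_trans; [apply Rmin_l|apply Rmin_l].
      - eapply Rle_trans; [apply Rmin_l|apply Rmin_r].
      - eapply Rle_trans; [apply Rmin_r|apply Rmin_l].
      - eapply Rle_trans; [apply Rmin_r|]. eapply Rle_trans; [apply Rmin_r|apply Rmin_l].
      - eapply Rle_trans; [apply Rmin_r|]. eapply Rle_trans; [apply Rmin_r|apply Rmin_r]. }
    destruct Hd0 as (Hd00 & Hd01 & Hd02 & Hd03 & Hd04 & Hd05).
    exists d0. split; auto. intros u v Hsol Hinit t Ht.
    assert (Hx2 : (u 0 - s)^2 < d0^2) by (pose proof (pow2_ge_0 (v 0 - vs)); lra).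
    assert (Hy2 : (v 0 - vs)^2 < d0^2) by (pose proof (pow2_ge_0 (u 0 - s)); lra).
    pose proof (sq_lt_abs _ _ Hd00 Hx2) as Hx. pose proof (sq_lt_abs _ _ Hd00 Hy2) as Hy.
    apply Rabs_def2 in Hx. apply Rabs_def2 in Hy.
    assert (Hpos := sol_pos delta theta eta eps u v ltac:(lra) Hth He ltac:(lra) Hsol ltac:(lra) ltac:(lra)).
    assert (HS : SOL delta theta eta eps u v) by (split; auto).
    set (H0v := Hf delta eps s vs (u 0) (v 0)).
    assert (HH0 : H0v < h).
    { unfold H0v, Hf. rewrite A0_eq by lra.
      pose proof (Bf_ub vs (v 0) Hvs ltac:(lra)) as HB.
      assert ((u 0 - s)^2/u 0 <= (u 0 - s)^2 / uM).
      { unfold Rdiv. apply Rmult_le_compat_l. apply pow2_ge_0. apply Rinv_le_contravar; lra. }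
      assert ((v 0 - vs)^2/v 0 <= (v 0 - vs)^2 * (2/vs)).
      { unfold Rdiv. apply Rmult_le_compat_l. apply pow2_ge_0.
        replace (2 * / vs) with (/ (vs/2)) by (field; lra). apply Rinv_le_contravar; lra. }
      assert (0 <= (u 0 - s)^2/u 0) by (apply Rdiv_le_0_compat; [apply pow2_ge_0|lra]).
      assert (eps*(1-delta)*((u 0 - s)^2/u 0) <= (u 0 - s)^2/u 0) by nra.
      assert ((u 0 - s)^2/uM + (v 0 - vs)^2 * (2/vs) = ((u 0 - s)^2 + 0) * (1/uM) + (v 0 - vs)^2 * (2/vs)) by (field; lra).
      assert ((u 0 - s)^2 * (1/uM) + (v 0 - vs)^2 * (2/vs) <= ((u 0 - s)^2 + (v 0 - vs)^2) * C).
      { unfold C. assert (0 < 1/uM) by (apply Rdiv_lt_0_compat; lra).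
        assert (0 < 2/vs) by (apply Rdiv_lt_0_compat; lra).
        pose proof (pow2_ge_0 (u 0 - s)). pose proof (pow2_ge_0 (v 0 - vs)). nra. }
      assert (((u 0 - s)^2 + (v 0 - vs)^2) * C < d0^2 * C) by (apply Rmult_lt_compat_r; lra).
      assert (d0^2 * C <= h).
      { assert (d0^2 <= d0) by nra.
        assert (d0 * C <= h/C * C) by (apply Rmult_le_compat_r; lra).
        replace (h/C*C) with h in H7 by (field; lra). nra. }
      lra. }
    assert (Hu0M : uM <= u 0) by lra.
    pose proof (trap delta theta eta eps uM s u v 0 HP ltac:(lra) HS (Rle_refl 0) Hu0M ltac:(fold vs; fold vM; fold H0v; lra)) as Htr.
    pose proof (H_mono delta theta eta eps uM s u v 0 t HP ltac:(lra) HS ltac:(lra)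
      ltac:(intros x Hx0; apply Htr; lra)) as Hmono. fold vs in Hmono. fold H0v in Hmono.
    destruct (Hpos t Ht) as [Hut Hvt].
    assert (Hut1 : u t <= 1).
    { pose proof (u_le_max delta theta eta eps u v Hth He HS 0 t ltac:(lra)).
      revert H. apply Rmax_case; lra. }
    pose proof (H_ge_B delta eps s vs (u t) (v t) ltac:(lra) Hd1' Hut) as HgeB.
    assert (Hvclose : Rabs (v t - vs) < rho).
    { apply Rabs_def1.
      - destruct (Rlt_le_dec (v t) (vs + rho)) as [|Hge]. lra. exfalso.
        pose proof (Bf_inc vs (vs + rho) (v t) Hvs ltac:(lra)). lra.
      - destruct (Rlt_le_dec (vs - rho) (v t)) as [|Hge]. lra. exfalso.
        pose proof (Bf_dec vs (v t) (vs - rho) Hvs ltac:(lra) ltac:(lra)). lra. }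
    assert (HA : eps*(1-delta)*A0 s (u t) < b4).
    { pose proof (Bf_nonneg vs (v t) Hvs Hvt). unfold Hf in Hmono. lra. }
    unfold b4 in HA. rewrite A0_eq in HA by lra.
    assert (Hu2 : (u t - s)^2 < e^2/4).
    { assert ((u t - s)^2/u t < e^2/4).
      { apply Rmult_lt_reg_l with (eps*(1-delta)). lra. lra. }
      assert ((u t - s)^2 <= (u t - s)^2/u t).
      { unfold Rdiv. rewrite <- (Rmult_1_r ((u t - s)^2)) at 1. apply Rmult_le_compat_l. apply pow2_ge_0.
        rewrite <- Rinv_1. apply Rinv_le_contravar; lra. }
      lra. }
    assert (Hv2 : (v t - vs)^2 < e^2/4).
    { rewrite <- (pow2_abs (v t - vs)).
      pose proof (Rabs_pos (v t - vs)). assert (Rabs (v t - vs) < e/2) by lra. nra. }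
    assert (0 < e^2) by nra. lra.
  -
    intros u v Hsol Hu0 Hv0.
    assert (Hpos := sol_pos delta theta eta eps u v ltac:(lra) Hth He ltac:(lra) Hsol Hu0 Hv0).
    assert (HS : SOL delta theta eta eps u v) by (split; auto).
    destruct (sol_conv delta theta eta eps uM s u v HP ltac:(lra) ltac:(fold vs; fold vM; lra) HS) as [Hcu Hcv].
    split; apply conv_lim; auto.
Qed.
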